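(* Let $\gamma<1$, $\gamma\neq 0$. The following two conditions are equivalent. (A) For all $\gamma'\in(\gamma,1)$, $$\lim_{x\uparrow\infty}\frac{u_0'(x)}{x^{\gamma'-1}}=0,$$ and for all $\gamma''<\gamma$, $$\lim_{x\uparrow\infty}\frac{u_0'(x)}{x^{\gamma''-1}}=\infty.$$ (B) The measure $\mu$ has finite support with right boundary at $\frac{1}{1-\gamma}$, i.e. $$\inf\{y>0:\mu((y,\infty))=0\}=\frac{1}{1-\gamma}.$$
   Context: Let $\mu$ be a nonzero finite positive Borel measure on $(0,\infty)$ such that $\int y e^{yz}\mu(dy)<\infty$ for every $z\in\mathbb{R}$. Define $h(z,t):=\int e^{yz-\frac12 y^2 t}\mu(dy)$ for $(z,t)\in\mathbb{R}\times[0,\infty)$. For each $t$, the map $z\mapsto h(z,t)$ is strictly increasing with range $(0,\infty)$. Let $u:(0,\infty)\times[0,\infty)\to\mathbb{R}$ be smooth, strictly increasing and strictly concave in $x$, solving $u_t=\frac12 u_x^2/u_{xx}$, and related to $h$ by $u_x(h(z,t),t)=e^{-z+t/2}$ for all $(z,t)$. Write $u_0(x):=u(x,0)$. *)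

(* Defs.v *)
From HB Require Import structures.
From mathcomp Require Import all_boot all_order all_algebra.
From mathcomp Require Import all_classical all_reals all_analysis.
Set Implicit Arguments. Unset Strict Implicit. Unset Printing Implicit Defensive.
Import Order.TTheory GRing.Theory Num.Theory.
Import numFieldNormedType.Exports.
Local Open Scope classical_set_scope.
Local Open Scope ring_scope.

Definition hfun (R : realType) (mu : {measure set R -> \bar R})
  (z t : R) : R :=
  fine (\int[mu]_(y in `]0%R, +oo[%classic) (expR (y * z - y ^+ 2 * t / 2))%:E)%E.

Definition half_strip (R : realType) : set (R * R)%type :=
  [set p | 0 < p.1 /\ 0 <= p.2].

(* u : (x,t) |-> u x t is smooth (C^oo up to the boundary t = 0) on
   (0,oo) x [0,oo), with D i j its partial derivative d^i/dx^i d^j/dt^j: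
   D 0 0 = u; each D i j is jointly continuous on the domain;
   its x-derivative is D (i+1) j; its t-derivative is D i (j+1)
   (a one-sided right derivative at t = 0). *)
Definition smooth_family (R : realType) (u : R -> R -> R)
  (D : nat -> nat -> R -> R -> R) : Prop :=
  (forall x t, D 0%N 0%N x t = u x t) /\
  (forall i j : nat, {within (@half_strip R), continuous (fun p : R * R => D i j p.1 p.2)}) /\
  (forall (i j : nat) (x t : R), 0 < x -> 0 <= t ->
     is_derive x (1:R) (fun x' => D i j x' t) (D i.+1 j x t)) /\
  (forall (i j : nat) (x t : R), 0 < x -> 0 < t ->
     is_derive t (1:R) (fun t' => D i j x t') (D i j.+1 x t)) /\
  (forall (i j : nat) (x : R), 0 < x ->
     (fun s => (D i j x s - D i j x 0) / s) s @[s --> 0^'+] --> D i j.+1 x 0).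

(* Main.v *)
Set Warnings "-notation-overridden,-ambiguous-paths,-notation-incompatible-prefix".
Require Import Defs.
From HB Require Import structures.
From mathcomp Require Import all_boot all_order all_algebra.
From mathcomp Require Import all_classical all_reals all_analysis.
From mathcomp Require Import ring lra measurable_realfun.
Import Order.TTheory GRing.Theory Num.Theory.
Import numFieldNormedType.Exports.
Local Open Scope classical_set_scope.
Local Open Scope ring_scope.

Section Asym.
Variable R : realType.

Lemma near_pinfty (P : R -> Prop) (M : R) :
  (forall x, M < x -> P x) -> \forall x \near +oo, P x.
Proof. move=> H; exists M; split; [exact: num_real | exact: H]. Qed.

Lemma ln_gt_of (a x : R) : expR a < x -> a < ln x.
Proof.
move=> Hx; have x0 : 0 < x by apply: lt_trans Hx; exact: expR_gt0.
by move: Hx; rewrite -ltr_ln ?posrE ?expR_gt0 // expRK.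
Qed.

Lemma pow_small (k C e : R) : k < 0 -> 0 < e ->
  \forall x \near +oo, C * expR (k * ln x) < e.
Proof.
move=> k0 e0.
have [C0|C0] := leP C 0.
  apply: (@near_pinfty _ 0) => x _.
  apply: (le_lt_trans _ e0); apply: mulr_le0_ge0 => //; exact/ltW/expR_gt0.
apply: (@near_pinfty _ (expR ((ln e - ln C) / k))) => x /ln_gt_of Hx.
have H1 : k * ln x < ln e - ln C.
  have := Hx; rewrite -(ltr_nM2l k0) [k * (_ / k)]mulrC divfK //; exact: ltr0_neq0.
rewrite -{1}(lnK C0) -expRD -[e in _ < e](lnK e0) ltr_expR; lra.
Qed.

Lemma pow_big (k C A : R) : 0 < k -> 0 < C ->
  \forall x \near +oo, A <= C * expR (k * ln x).
Proof.
move=> k0 C0.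
pose A' := Num.max A 1.
have A'0 : 0 < A' by rewrite lt_max ltr01 orbT.
have AA' : A <= A' by rewrite le_max lexx.
apply: (@near_pinfty _ (expR ((ln A' - ln C) / k))) => x /ln_gt_of Hx.
have H1 : ln A' - ln C < k * ln x.
  have := Hx; rewrite -(ltr_pM2l k0) [k * (_ / k)]mulrC divfK //; exact: lt0r_neq0.
apply: (le_trans AA').
rewrite -{1}(lnK C0) -expRD -[A' in A' <= _](lnK A'0) ler_expR; lra.
Qed.

End Asym.
Section M.
Variable R : realType.
Lemma deriv_quot (f : R -> R) (a d : R) : is_derive a 1 f d ->
  (fun h => h^-1 * (f (h + a) - f a)) @ 0^' --> d.
Proof.
move=> H; have := @ex_derive _ _ _ a 1 f d H.
rewrite /derivable.
have -> : lim ((fun h : R => h^-1 *: ((f \o shift a) (h *: 1) - f a)) @ 0^') = d.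
  exact: (@derive_val _ _ _ a 1 f d H).
suff -> : (fun h => h^-1 * (f (h + a) - f a)) = (fun h : R => h^-1 *: ((f \o shift a) (h *: 1) - f a)) by [].
by apply/funext => h /=; rewrite /shift /= (_ : h%:A = h) //; exact: mulr1.
Qed.

Lemma conc_mono (f df : R -> R) :
  (forall x : R, 0 < x -> is_derive x 1 f (df x)) ->
  (forall x y l : R, 0 < x -> 0 < y -> x != y -> 0 < l -> l < 1 ->
     l * f x + (1 - l) * f y < f (l * x + (1 - l) * y)) ->
  forall x y : R, 0 < x -> x < y -> df y <= df x.
Proof.
move=> Hd Hc x y x0 xy.
have yx0 : 0 < y - x by lra.
pose s := (f y - f x) / (y - x).
have E1 : s * (y - x) = f y - f x by rewrite /s divfK //; lra.
apply: (@le_trans _ _ s).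
  have y0 : 0 < y by lra.
  have Hq := cvg_dnbhs_at_left (deriv_quot _ _ _ (Hd y y0)).
  apply: (cvgr_to_le Hq).
  near=> h.
  have h0 : h < 0 by near: h; exact: nbhs_left_lt.
  have hlt : - (y - x) < h by near: h; apply: nbhs_left_gt; lra.
  set X := f (h + y) - f y.
  pose t := - h / (y - x).
  have t0 : 0 < t by rewrite /t divr_gt0 //; lra.
  have t1 : t < 1 by rewrite /t ltr_pdivrMr //; lra.
  have Ht : h = - t * (y - x) by rewrite /t mulNr divfK ?opprK //; lra.
  have := Hc x y t x0 ltac:(lra) ltac:(by rewrite lt_eqF) t0 t1.
  have -> : t * x + (1 - t) * y = h + y by rewrite Ht; ring.
  move=> Hcc.
  have HX : X = (h^-1 * X) * h by rewrite mulrC mulrA mulfV ?mul1r //; lra.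
  have Hsh : s * h = - t * (f y - f x) by rewrite Ht -E1; ring.
  have : s * h < (h^-1 * X) * h by rewrite -HX Hsh /X; lra.
  nra.
have Hq := cvg_dnbhs_at_right (deriv_quot _ _ _ (Hd x x0)).
apply: (cvgr_to_ge Hq).
near=> h.
have h0 : 0 < h by near: h; exact: nbhs_right_gt.
have hlt : h < y - x by near: h; apply: nbhs_right_lt.
set X := f (h + x) - f x.
pose t := h / (y - x).
have t0 : 0 < t by rewrite /t divr_gt0.
have t1 : t < 1 by rewrite /t ltr_pdivrMr //; lra.
have Ht : h = t * (y - x) by rewrite /t divfK //; lra.
have := Hc x y (1 - t) x0 ltac:(lra) ltac:(by rewrite lt_eqF) ltac:(lra) ltac:(lra).
have -> : (1 - t) * x + (1 - (1 - t)) * y = h + x by rewrite Ht; ring.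
move=> Hcc.
have HX : X = (h^-1 * X) * h by rewrite mulrC mulrA mulfV ?mul1r //; lra.
have Hsh : s * h = t * (f y - f x) by rewrite Ht -E1; ring.
have : s * h < (h^-1 * X) * h by rewrite -HX Hsh /X; lra.
nra.
Unshelve. all: by end_near.
Qed.
End M.
Section Meas.
Context {R : realType}.
Variable mu : {measure set R -> \bar R}.

Lemma mexp (z : R) (D : set R) :
  measurable_fun D (fun y : R => ((expR (y * z))%:E : \bar R)).
Proof.
apply/measurable_EFinP.
apply: measurableT_comp; first exact: measurable_expR.
exact: mulrr_measurable.
Qed.

Definition HH (z : R) : \bar R :=
  (\int[mu]_(y in `]0%R, +oo[%classic) (expR (y * z))%:E)%E.

Lemma hfun0 z : hfun mu z 0 = fine (HH z).
Proof.
rewrite /hfun /HH; congr fine; apply: eq_integral => y _.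
by rewrite mulr0 mul0r subr0.
Qed.

Lemma HH_upper (y z : R) : 0 <= z -> mu `]y, +oo[%classic = 0%E ->
  (HH z <= (expR (y * z))%:E * mu setT)%E.
Proof.
move=> z0 my.
apply: (@le_trans _ _ (\int[mu]_(x in `]0%R, +oo[%classic) (cst (expR (y * z))%:E) x)%E).
  apply: ae_ge0_le_integral => //.
  - exact: mexp.
  - by move=> x _; rewrite /cst lee_fin expR_ge0.
  - exists `]y, +oo[%classic; split => //.
    move=> x Hx; rewrite /= in_itv /= andbT ltNge; apply/negP => xy.
    apply: Hx => _; rewrite /cst lee_fin ler_expR; exact: ler_wpM2r.
rewrite integral_cst //; apply: lee_wpmul2l; first by rewrite lee_fin expR_ge0.
by apply: le_measure; rewrite ?inE.
Qed.

Lemma HH_lower (y z : R) : 0 <= y -> 0 <= z ->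
  ((expR (y * z))%:E * mu `]y, +oo[%classic <= HH z)%E.
Proof.
move=> y0 z0.
rewrite -integral_cst //.
apply: (@le_trans _ _ (\int[mu]_(x in `]y, +oo[%classic) (expR (x * z))%:E)%E).
  apply: ge0_le_integral => //.
  - by move=> x _; rewrite /cst lee_fin expR_ge0.
  - exact: mexp.
  - move=> x /=; rewrite in_itv /= andbT => yx.
    rewrite /cst lee_fin ler_expR; apply: ler_wpM2r => //; exact: ltW.
apply: ge0_subset_integral => //.
- exact: mexp.
- move=> x /=; rewrite !in_itv /= !andbT => yx; lra.
Qed.

Lemma HH_ge0 z : (0 <= HH z)%E.
Proof. by apply: integral_ge0 => x _; rewrite lee_fin expR_ge0. Qed.

Lemma HH_fin (z : R) : 0 <= z -> (mu setT < +oo)%E ->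
  mu.-integrable `]0%R, +oo[%classic (fun y => (y * expR (y * z))%:E) ->
  HH z \is a fin_num.
Proof.
move=> z0 mfin Hi.
apply: integrable_fin_num => //.
apply: (@le_integrable _ _ _ mu _ _ _ (fun y => (expR z)%:E + (y * expR (y * z))%:E)%E) => //.
- exact: mexp.
- move=> x /=; rewrite in_itv /= andbT => x0.
  rewrite lee_fin !ger0_norm ?expR_ge0 //; last first.
    by apply: addr_ge0; [exact: expR_ge0 | apply: mulr_ge0; [exact: ltW|exact: expR_ge0]].
  have e0 := expR_ge0 (x * z).
  have [x1|x1] := leP x 1.
    have : expR (x * z) <= expR z by rewrite ler_expR ler_piMl.
    have : 0 <= x * expR (x * z) by apply: mulr_ge0 => //; exact: ltW.
    lra.
  have : expR (x * z) <= x * expR (x * z) by rewrite ler_peMl // ltW.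
  have := expR_ge0 z; lra.
apply: integrableD => //.
  apply/integrableP; split; first exact: measurable_cst.
  rewrite (_ : (fun x => `|(expR z)%:E|)%E = cst `|(expR z)%:E|%E) //.
  rewrite integral_cst //; apply: lte_mul_pinfty => //.
  by apply: le_lt_trans mfin; apply: le_measure; rewrite ?inE.
Qed.

Lemma mu_pos_somewhere : (mu setT < +oo)%E -> mu setT <> 0%E ->
  mu `]-oo, 0%R]%classic = 0%E ->
  exists y0 : R, 0 < y0 /\ mu `]y0, +oo[%classic <> 0%E.
Proof.
move=> mfin mnz m0.
apply/not_existsP => Hall.
have Hn : forall n : nat, mu `]n.+1%:R^-1, +oo[%classic = 0%E.
  move=> n; have := Hall n.+1%:R^-1.
  move=> /not_andP [|]; first by move=> H; exfalso; apply: H; rewrite invr_gt0.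
  by move/contrapT.
have Hneg : mu.-negligible (\bigcup_n `]n.+1%:R^-1, +oo[%classic).
  apply: negligible_bigcup => n; exists `]n.+1%:R^-1, +oo[%classic; split => //.
have E : `]0%R, +oo[%classic = \bigcup_n `]n.+1%:R^-1, +oo[%classic :> set R.
  apply/seteqP; split => x /=.
    rewrite in_itv /= andbT => x0.
    have [k Hk] := ltr_add_invr x0.
    by exists k => //=; rewrite in_itv /= andbT; rewrite add0r in Hk.
  move=> [n _] /=; rewrite !in_itv /= !andbT => Hx.
  apply: lt_trans Hx; rewrite invr_gt0; exact: ltr0Sn.
have m1 : mu `]0%R, +oo[%classic = 0%E.
  rewrite E; case: Hneg => A [mA A0 sA].
  apply/eqP; rewrite eq_le measure_ge0 andbT -A0.
  apply: le_measure => //; rewrite ?inE //.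
  by apply: bigcup_measurable => n _.
apply: mnz.
have -> : setT = `]-oo, 0%R]%classic `|` `]0%R, +oo[%classic :> set R.
  apply/seteqP; split => x // _ /=; rewrite !in_itv /= andbT.
  by case: (leP x 0) => _; [left|right].
by rewrite measureU0.
Qed.
End Meas.
Section Core.
Variable R : realType.
Variable mu : {measure set R -> \bar R}.
Hypothesis mu_fin : (mu setT < +oo)%E.
Hypothesis mu_nz : mu setT <> 0%E.
Hypothesis mu_int : forall z : R,
  mu.-integrable `]0%R, +oo[%classic (fun y => (y * expR (y * z))%:E).
Variable v : R -> R.
Hypothesis vmono : forall x y, 0 < x -> x <= y -> v y <= v x.
Hypothesis vh : forall z, v (fine (HH mu z)) = expR (- z).
Variable y0 : R.
Hypothesis y00 : 0 < y0.
Hypothesis my0 : mu `]y0, +oo[%classic <> 0%E.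

Lemma mu_fin_num {A : set R} : measurable A -> mu A \is a fin_num.
Proof.
move=> mA; rewrite ge0_fin_numE ?measure_ge0 //.
by apply: le_lt_trans mu_fin; apply: le_measure; rewrite ?inE.
Qed.

Lemma fine_mu_pos {A : set R} : measurable A -> mu A <> 0%E -> 0 < fine (mu A).
Proof.
move=> mA nz; apply: fine_gt0; apply/andP; split.
  rewrite lt_neqAle measure_ge0 andbT; apply/eqP => h; apply: nz; by rewrite h.
by apply: le_lt_trans mu_fin; apply: le_measure; rewrite ?inE.
Qed.

Lemma HH_pos z : 0 <= z -> (0 < HH mu z)%E.
Proof.
move=> z0; apply: lt_le_trans (HH_lower mu y0 z (ltW y00) z0).
rewrite -(fineK (mu_fin_num (measurable_itv _))) -EFinM lte_fin.
apply: mulr_gt0; first exact: expR_gt0.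
exact: fine_mu_pos.
Qed.

Lemma exp_lnB (a b : R) : 0 < a -> 0 < b -> expR (ln a - ln b) = a / b.
Proof. by move=> a0 b0; rewrite expRD expRN !lnK. Qed.

Lemma upper_v y x : 0 < y -> mu `]y, +oo[%classic = 0%E ->
  fine (mu setT) <= x -> v x <= expR (- ((ln x - ln (fine (mu setT))) / y)).
Proof.
move=> y0' my Mx.
have M0 : 0 < fine (mu setT) by apply: fine_mu_pos.
set M := fine (mu setT).
have x0 : 0 < x by apply: lt_le_trans M0 Mx.
set z := (ln x - ln M) / y.
have z0 : 0 <= z.
  rewrite /z divr_ge0 ?subr_ge0 //; last exact: ltW.
  by rewrite ler_ln ?posrE.
have Hu := HH_upper mu y z z0 my.
have eyz : expR (y * z) = x / M.
  by rewrite /z mulrC divfK ?exp_lnB //; exact: lt0r_neq0.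
rewrite eyz -(fineK (mu_fin_num measurableT)) -EFinM -/M in Hu.
rewrite divfK in Hu; last exact: lt0r_neq0.
have Hfin : HH mu z \is a fin_num.
  rewrite ge0_fin_numE; last exact: HH_ge0.
  exact: le_lt_trans Hu (ltry _).
have hx : fine (HH mu z) <= x by rewrite -lee_fin fineK.
have hp : 0 < fine (HH mu z).
  apply: fine_gt0; rewrite HH_pos //=; exact: le_lt_trans Hu (ltry _).
rewrite -vh; exact: vmono.
Qed.

Lemma lower_v y x : 0 < y -> mu `]y, +oo[%classic <> 0%E ->
  fine (mu `]y, +oo[%classic) <= x ->
  expR (- ((ln x - ln (fine (mu `]y, +oo[%classic))) / y)) <= v x.
Proof.
move=> y0' my Mx.
have M0 : 0 < fine (mu `]y, +oo[%classic) by apply: fine_mu_pos.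
set M := fine (mu `]y, +oo[%classic).
have x0 : 0 < x by apply: lt_le_trans M0 Mx.
set z := (ln x - ln M) / y.
have z0 : 0 <= z.
  rewrite /z divr_ge0 ?subr_ge0 //; last exact: ltW.
  by rewrite ler_ln ?posrE.
have Hl := HH_lower mu y z (ltW y0') z0.
have eyz : expR (y * z) = x / M.
  by rewrite /z mulrC divfK ?exp_lnB //; exact: lt0r_neq0.
rewrite eyz -(fineK (mu_fin_num (measurable_itv _))) -EFinM -/M in Hl.
rewrite divfK in Hl; last exact: lt0r_neq0.
have Hfin : HH mu z \is a fin_num by apply: HH_fin.
have hx : x <= fine (HH mu z) by rewrite -lee_fin fineK.
rewrite -vh; apply: vmono => //.
Qed.

Lemma powR_pos (x a : R) : 0 < x -> x `^ a = expR (a * ln x).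
Proof. by move=> x0; rewrite /powR gt_eqF. Qed.

Lemma ratio_upper y g : 0 < y -> mu `]y, +oo[%classic = 0%E ->
  \forall x \near +oo, v x / x `^ (g - 1) <=
     expR (ln (fine (mu setT)) / y) * expR ((1 - g - y^-1) * ln x).
Proof.
move=> y0' my.
have M0 : 0 < fine (mu setT) by apply: fine_mu_pos.
apply: (@near_pinfty _ _ (fine (mu setT))) => x Mx.
have x0 : 0 < x by apply: lt_trans M0 Mx.
rewrite powR_pos //.
have Hv := upper_v y x y0' my (ltW Mx).
apply: le_trans (ler_wpM2r _ Hv) _; first by rewrite invr_ge0 ltW ?expR_gt0.
rewrite -expRN -!expRD le_eqVlt; apply/orP; left; apply/eqP; congr expR.
by field; exact: lt0r_neq0.
Qed.

Lemma ratio_lower y g : 0 < y -> mu `]y, +oo[%classic <> 0%E ->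
  \forall x \near +oo,
     expR (ln (fine (mu `]y, +oo[%classic)) / y) * expR ((1 - g - y^-1) * ln x)
     <= v x / x `^ (g - 1).
Proof.
move=> y0' my.
have M0 : 0 < fine (mu `]y, +oo[%classic) by apply: fine_mu_pos.
apply: (@near_pinfty _ _ (fine (mu `]y, +oo[%classic))) => x Mx.
have x0 : 0 < x by apply: lt_trans M0 Mx.
rewrite powR_pos //.
have Hv := lower_v y x y0' my (ltW Mx).
apply: le_trans (ler_wpM2r _ Hv); last by rewrite invr_ge0 ltW ?expR_gt0.
rewrite -expRN -!expRD le_eqVlt; apply/orP; left; apply/eqP; congr expR.
by field; exact: lt0r_neq0.
Qed.

Lemma ratio_pos g : \forall x \near +oo, 0 < v x / x `^ (g - 1).
Proof.
apply: filterS (ratio_lower y0 g y00 my0) => x; apply: lt_le_trans.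
by apply: mulr_gt0; exact: expR_gt0.
Qed.

Lemma inv_lt_swap (a y : R) : 0 < a -> 0 < y -> y < a^-1 -> a < y^-1.
Proof.
by move=> a0 y0' h; rewrite -[a]invrK ltf_pV2 ?posrE ?invr_gt0.
Qed.

Lemma inv_gt_swap (a y : R) : 0 < a -> 0 < y -> a^-1 < y -> y^-1 < a.
Proof.
by move=> a0 y0' h; rewrite -[a]invrK ltf_pV2 ?posrE ?invr_gt0.
Qed.

Theorem core (gamma : R) : gamma < 1 ->
  ((forall g', gamma < g' -> g' < 1 ->
      (fun x => v x / x `^ (g' - 1)) x @[x --> +oo] --> 0) /\
   (forall g'', g'' < gamma ->
      (fun x => v x / x `^ (g'' - 1)) x @[x --> +oo] --> +oo))
  <->
  ereal_inf [set (y%:E : \bar R) | y in [set y : R | 0 < y /\ mu `]y, +oo[%classic = 0%E]]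
    = ((1 - gamma)^-1)%:E.
Proof.
move=> g1.
set c := (1 - gamma)^-1.
have c0 : 0 < c by rewrite /c invr_gt0; lra.
have M0 : 0 < fine (mu setT) by apply: fine_mu_pos.
set S := [set (y%:E : \bar R) | y in [set y : R | 0 < y /\ mu `]y, +oo[%classic = 0%E]].
split.
- move=> [HA0 HAoo].
  have [Hlt|Hge] := ltP (ereal_inf S) c%:E.
    exfalso.
    have [_ [y [y0' my] <-] yc] := ereal_inf_lt Hlt.
    rewrite lte_fin in yc.
    have H1 : 1 - gamma < y^-1 by apply: inv_lt_swap => //; lra.
    pose g := (1 - y^-1 + gamma) / 2.
    have gg : g < gamma by rewrite /g; lra.
    have k0 : 1 - g - y^-1 < 0 by rewrite /g; lra.
    have F1 : \forall x \near +oo, 1 <= v x / x `^ (g - 1).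
      by move/cvgryPge: (HAoo g gg) => /(_ 1).
    have F2 := ratio_upper y g y0' my.
    have F3 := @pow_small _ _ (expR (ln (fine (mu setT)) / y)) _ k0 ltr01.
    have [x [a [b d]]] := filter_ex (filterI F1 (filterI F2 F3)).
    move: a b d => /= a b d; lra.
  rewrite le_eqVlt in Hge; case/orP: Hge => [/eqP <-//|Hgt].
  exfalso.
  have [y [cy yinf]] : exists y : R, c < y /\ (y%:E < ereal_inf S)%E.
    move: Hgt; case: (ereal_inf S) => [r| |] //.
      rewrite lte_fin => cr; exists ((c + r) / 2); split; [lra | rewrite lte_fin; lra].
    by move=> _; exists (c + 1); split; [lra | exact: ltry].
  have y0' : 0 < y by lra.
  have my : mu `]y, +oo[%classic <> 0%E.
    move=> my.
    have : S y%:E by exists y.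
    by move=> /ereal_inf_lbound; rewrite leNgt yinf.
  have H1 : y^-1 < 1 - gamma by apply: inv_gt_swap => //; lra.
  have yi0 : 0 < y^-1 by rewrite invr_gt0.
  pose g := (gamma + (1 - y^-1)) / 2.
  have gg : gamma < g by rewrite /g; lra.
  have g1' : g < 1 by rewrite /g; lra.
  have k0 : 0 < 1 - g - y^-1 by rewrite /g; lra.
  have F1 : \forall x \near +oo, `|v x / x `^ (g - 1)| < 1.
    by move/cvgr0Pnorm_lt: (HA0 g gg g1') => /(_ 1 ltr01).
  have F2 := ratio_lower y g y0' my.
  have F3 := @pow_big _ _ (expR (ln (fine (mu `]y, +oo[%classic)) / y)) 1 k0 (expR_gt0 _).
  have [x [a [b d]]] := filter_ex (filterI F1 (filterI F2 F3)).
  move: a b d => /= a b d.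
  have := ler_norm (v x / x `^ (g - 1)); lra.
- move=> Hinf; split.
  + move=> g gg g1'.
    have cg : c < (1 - g)^-1.
      by rewrite /c ltf_pV2 ?posrE; lra.
    have : (ereal_inf S < ((1 - g)^-1)%:E)%E by rewrite Hinf lte_fin.
    move=> /ereal_inf_lt [_ [y [y0' my] <-] yc]; rewrite lte_fin in yc.
    have H1 : 1 - g < y^-1 by apply: inv_lt_swap => //; lra.
    have k0 : 1 - g - y^-1 < 0 by lra.
    apply/cvgr0Pnorm_lt => e e0.
    have F2 := ratio_upper y g y0' my.
    have F3 := @pow_small _ _ (expR (ln (fine (mu setT)) / y)) _ k0 e0.
    have F4 := ratio_pos g.
    apply: filterS (filterI F2 (filterI F3 F4)) => x /= [a [b d]].
    rewrite ger0_norm; [lra | exact: ltW].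
  + move=> g gg.
    have cg0 : 0 < (1 - g)^-1 by rewrite invr_gt0; lra.
    have cg : (1 - g)^-1 < c.
      by rewrite /c ltf_pV2 ?posrE; lra.
    pose y := ((1 - g)^-1 + c) / 2.
    have y0' : 0 < y by rewrite /y; lra.
    have yc : y < c by rewrite /y; lra.
    have my : mu `]y, +oo[%classic <> 0%E.
      move=> my.
      have : S y%:E by exists y.
      by move=> /ereal_inf_lbound; rewrite Hinf lee_fin leNgt yc.
    have H1 : y^-1 < 1 - g by apply: inv_gt_swap => //; [lra | rewrite /y; lra].
    have k0 : 0 < 1 - g - y^-1 by lra.
    apply/cvgryPge => A.
    apply: filterS (filterI (ratio_lower y g y0' my)
       (@pow_big _ _ (expR (ln (fine (mu `]y, +oo[%classic)) / y)) A k0 (expR_gt0 _))).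
    by move=> x /= [a b]; lra.
Qed.

End Core.

Theorem lemma6 (R : realType)
  (mu : {measure set R -> \bar R})
  (mu_fin : (mu setT < +oo)%E)
  (mu_nz : mu setT <> 0%E)
  (mu_supp : mu `]-oo, 0%R]%classic = 0%E)
  (mu_int : forall z : R,
     mu.-integrable `]0%R, +oo[%classic (fun y => (y * expR (y * z))%:E))
  (u : R -> R -> R) (D : nat -> nat -> R -> R -> R)
  (u_smooth : smooth_family u D)
  (u_incr : forall t x y, 0 <= t -> 0 < x -> x < y -> u x t < u y t)
  (u_conc : forall t x y l, 0 <= t -> 0 < x -> 0 < y -> x != y ->
     0 < l -> l < 1 ->
     l * u x t + (1 - l) * u y t < u (l * x + (1 - l) * y) t)
  (u_pde : forall x t, 0 < x -> 0 <= t ->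
     D 0%N 1%N x t = 2^-1 * (D 1%N 0%N x t) ^+ 2 / D 2%N 0%N x t)
  (u_h : forall z t, 0 <= t -> D 1%N 0%N (hfun mu z t) t = expR (- z + t / 2))
  (gamma : R) (gamma_lt1 : gamma < 1) (gamma_nz : gamma != 0) :
  ((forall g', gamma < g' -> g' < 1 ->
      (fun x => D 1%N 0%N x 0 / x `^ (g' - 1)) x @[x --> +oo] --> 0) /\
   (forall g'', g'' < gamma ->
      (fun x => D 1%N 0%N x 0 / x `^ (g'' - 1)) x @[x --> +oo] --> +oo))
  <->
  ereal_inf [set (y%:E : \bar R) | y in [set y : R | 0 < y /\ mu `]y, +oo[%classic = 0%E]]
    = ((1 - gamma)^-1)%:E.
Proof.
have [Dd [_ [Dx _]]] := u_smooth.
pose v := fun x => D 1%N 0%N x 0.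
have vmono : forall x y : R, 0 < x -> x <= y -> v y <= v x.
  move=> x y x0; rewrite le_eqVlt => /orP [/eqP -> //|xy].
  apply: (@conc_mono R (fun x => u x 0) v) => //.
  - move=> a a0; have := Dx 0%N 0%N a 0 a0 (lexx 0).
    have -> : (fun x' => D 0%N 0%N x' 0) = (fun x => u x 0).
      by apply/funext => ?; exact: Dd.
    by [].
  - move=> a b l a0 b0 ab l0 l1; exact: u_conc.
have vh : forall z, v (fine (HH mu z)) = expR (- z).
  move=> z; rewrite /v -hfun0 u_h ?lexx //; by rewrite mul0r addr0.
have [y0 [y00 my0]] := mu_pos_somewhere mu mu_fin mu_nz mu_supp.
exact: (@core R mu mu_fin mu_nz mu_int v vmono vh y0 y00 my0 gamma gamma_lt1).
Qed.
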